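(* Let $q$ be a prime power and let $\ell_1,\ell_2,\ell_3,\ell_4$ be lines in $\mathrm{PG}(4,q)$ such that (L1) any three of them span $\mathrm{PG}(4,q)$, and (L2) any two of them are skew. Then at most one of the four lines can be obtained by (exact) $(3,1)$-repair from the remaining three lines; here a line $\ell$ is obtained by $(3,1)$-repair from lines $a,b,c$ if there are points $P_a\in a$, $P_b\in b$, $P_c\in c$ with $\ell\subseteq\langle P_a,P_b,P_c\rangle$. *)

(* Defs.v *)
(* PG(4,q) = projective geometry of F^5, F a finite field
   with q = #|F| elements (every prime power q arises this way).
   A projective subspace is modelled by the row space of a matrix over F;
   a line of PG(4,q) is the row space of a rank-2 matrix in 'M[F]_(2,5);
   a point is the row space of a nonzero row vector in 'rV[F]_5. *)
From HB Require Import structures.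
From mathcomp Require Import all_boot all_order all_algebra.
Set Implicit Arguments. Unset Strict Implicit. Unset Printing Implicit Defensive.
Import GRing.Theory.
Local Open Scope ring_scope.

Section PG4.
Variable F : finFieldType.

Definition is_line (L : 'M[F]_(2,5)) : bool := \rank L == 2%N.

Definition repair31 (l a b c : 'M[F]_(2,5)) : Prop :=
  exists (pa pb pc : 'rV[F]_5),
    [/\ [&& pa != 0, pb != 0 & pc != 0],
        [&& (pa <= a)%MS, (pb <= b)%MS & (pc <= c)%MS] &
        (l <= col_mx (col_mx pa pb) pc)%MS].

Definition repaired_from_rest (ls : 'I_4 -> 'M[F]_(2,5)) (i : 'I_4) : Prop :=
  exists j k m : 'I_4,
    [/\ uniq [:: i; j; k; m] & repair31 (ls i) (ls j) (ls k) (ls m)].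

Definition any_three_span (ls : 'I_4 -> 'M[F]_(2,5)) : Prop :=
  forall i j k : 'I_4, uniq [:: i; j; k] ->
    \rank (col_mx (col_mx (ls i) (ls j)) (ls k)) = 5%N.

Definition pairwise_skew (ls : 'I_4 -> 'M[F]_(2,5)) : Prop :=
  forall i j : 'I_4, i != j -> \rank (ls i :&: ls j)%MS = 0%N.

End PG4.

(* Main.v *)
From HB Require Import structures.
From mathcomp Require Import all_boot all_order all_algebra.
From mathcomp Require Import zify.
Require Import Defs.
Set Implicit Arguments. Unset Strict Implicit. Unset Printing Implicit Defensive.
Import GRing.Theory.
Local Open Scope ring_scope.

Section S.
Variable F : finFieldType.

Lemma supr m1 m2 (X : 'M[F]_(m1,5)) (Y : 'M[F]_(m2,5)) :
  (X <= Y)%MS -> (\rank Y <= \rank X)%N -> (Y <= X)%MS.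
Proof. by move=> sXY le; have [_ <-] := mxrank_leqif_sup sXY; rewrite eqn_leq le mxrankS. Qed.

Lemma colsub3 m1 m2 m3 (X : 'M[F]_(m1,5)) (Y : 'M[F]_(m2,5)) (Z : 'M[F]_(m3,5)) :
  (col_mx (col_mx X Y) Z <= X + Y + Z)%MS.
Proof.
rewrite !col_mx_sub addsmxSr andbT.
by rewrite !(submx_trans _ (addsmxSl _ Z)) ?addsmxSl ?addsmxSr.
Qed.

Lemma sub3 m1 m2 m3 m4 (X : 'M[F]_(m1,5)) (Y : 'M[F]_(m2,5)) (Z : 'M[F]_(m3,5)) (W : 'M[F]_(m4,5)):
  (X <= W)%MS -> (Y <= W)%MS -> (Z <= W)%MS -> (X + Y + Z <= W)%MS.
Proof. by move=> h1 h2 h3; rewrite !addsmx_sub h1 h2 h3. Qed.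

Lemma rk3 (x y z : 'rV[F]_5) : (\rank (x + y + z) <= 3)%N.
Proof.
have := mxrank_adds_leqif (x + y)%MS z; have := mxrank_adds_leqif x y.
have := rank_leq_row x; have := rank_leq_row y; have := rank_leq_row z.
move=> ? ? ? [? _] [? _]; lia.
Qed.

Ltac nl := repeat match goal with
  | H : is_true (_ != _) |- _ => clear H
  | H : is_true (_ <= _)%MS |- _ => clear H
  | H : forall _, _ |- _ => clear H end; lia.

Lemma core (A B C D : 'M[F]_(2,5)) (p2 p3 p4 q1 q3 q4 : 'rV[F]_5) :
 \rank A = 2%N -> \rank B = 2%N ->
 \rank (A :&: B)%MS = 0%N -> \rank (C :&: D)%MS = 0%N ->
 \rank (col_mx (col_mx A B) C) = 5%N -> \rank (col_mx (col_mx A B) D) = 5%N ->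
 p2 != 0 -> p3 != 0 -> p4 != 0 -> q1 != 0 -> q3 != 0 -> q4 != 0 ->
 (p2 <= B)%MS -> (p3 <= C)%MS -> (p4 <= D)%MS ->
 (q1 <= A)%MS -> (q3 <= C)%MS -> (q4 <= D)%MS ->
 (A <= col_mx (col_mx p2 p3) p4)%MS -> (B <= col_mx (col_mx q1 q3) q4)%MS -> False.
Proof.
move=> rA rB AB0 CD0 sC sD p20 p30 p40 q10 q30 q40 p2B p3C p4D q1A q3C q4D hA hB.
have r1 : forall v : 'rV[F]_5, v != 0 -> \rank v = 1%N by move=> v v0; rewrite rank_rV v0.
move: hA hB => /(submx_trans)/(_ (colsub3 _ _ _)) hA /(submx_trans)/(_ (colsub3 _ _ _)) hB.
have rP := rk3 p2 p3 p4; have rS := rk3 q1 q3 q4.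
have {}sC : \rank (A + B + C) = 5%N.
  by apply/eqP; rewrite eqn_leq rank_leq_col -{1}sC mxrankS ?colsub3.
have {}sD : \rank (A + B + D) = 5%N.
  by apply/eqP; rewrite eqn_leq rank_leq_col -{1}sD mxrankS ?colsub3.
have rH : \rank (A + B)%MS = 4%N by have := mxrank_sum_cap A B; rewrite AB0 rA rB; nl.
have p2P : (p2 <= p2 + p3 + p4)%MS := submx_trans (addsmxSl p2 p3) (addsmxSl _ p4).
have p3P : (p3 <= p2 + p3 + p4)%MS := submx_trans (addsmxSr p2 p3) (addsmxSl _ p4).
have p4P : (p4 <= p2 + p3 + p4)%MS := addsmxSr _ _.
have q1S : (q1 <= q1 + q3 + q4)%MS := submx_trans (addsmxSl q1 q3) (addsmxSl _ q4).
have q3S : (q3 <= q1 + q3 + q4)%MS := submx_trans (addsmxSr q1 q3) (addsmxSl _ q4).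
have q4S : (q4 <= q1 + q3 + q4)%MS := addsmxSr _ _.
have mP : (p3 + p4 <= p2 + p3 + p4)%MS by rewrite addsmx_sub p3P p4P.
have PH : (p2 + p3 + p4 <= A + B)%MS.
  have h1 : (A + B <= (p2 + p3 + p4) + B)%MS by apply: addsmxS.
  have h2 : (1 <= \rank ((p2 + p3 + p4) :&: B))%N.
    have h : (p2 <= (p2 + p3 + p4) :&: B)%MS by rewrite sub_capmx p2P p2B.
    by move/mxrankS: h; rewrite r1.
  have := mxrank_sum_cap (p2 + p3 + p4)%MS B; have := mxrankS h1; rewrite rH rB => h3 h4.
  apply: submx_trans (addsmxSl _ B) _; apply: supr h1 _; nl.
have SH : (q1 + q3 + q4 <= A + B)%MS.
  have h1 : (A + B <= A + (q1 + q3 + q4))%MS by apply: addsmxS.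
  have h2 : (1 <= \rank (A :&: (q1 + q3 + q4)))%N.
    have h : (q1 <= A :&: (q1 + q3 + q4))%MS by rewrite sub_capmx q1S q1A.
    by move/mxrankS: h; rewrite r1.
  have := mxrank_sum_cap A (q1 + q3 + q4)%MS; have := mxrankS h1; rewrite rH rA => h3 h4.
  apply: submx_trans (addsmxSr A _) _; apply: supr h1 _; nl.
have q3p3 : (q3 <= p3)%MS.
  have h1 : (\rank ((A + B) :&: C) <= 1)%N.
    have := mxrank_sum_cap (A + B)%MS C; have := rank_leq_row C; rewrite sC rH; nl.
  have h2 : (p3 <= (A + B) :&: C)%MS by rewrite sub_capmx p3C (submx_trans p3P PH).
  have h3 : (q3 <= (A + B) :&: C)%MS by rewrite sub_capmx q3C (submx_trans q3S SH).
  apply: submx_trans h3 _; apply: supr h2 _; rewrite r1 //.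
have q4p4 : (q4 <= p4)%MS.
  have h1 : (\rank ((A + B) :&: D) <= 1)%N.
    have := mxrank_sum_cap (A + B)%MS D; have := rank_leq_row D; rewrite sD rH; nl.
  have h2 : (p4 <= (A + B) :&: D)%MS by rewrite sub_capmx p4D (submx_trans p4P PH).
  have h3 : (q4 <= (A + B) :&: D)%MS by rewrite sub_capmx q4D (submx_trans q4S SH).
  apply: submx_trans h3 _; apply: supr h2 _; rewrite r1 //.
have rm : \rank (p3 + p4)%MS = 2%N.
  have h1 : \rank (p3 :&: p4)%MS = 0%N.
    by apply/eqP; rewrite -leqn0; move: (mxrankS (capmxS p3C p4D)); rewrite CD0.
  have := mxrank_sum_cap p3 p4; rewrite h1 !r1 //; nl.
have Bm : (B <= q1 + (p3 + p4))%MS.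
  apply: submx_trans hB _; apply: sub3; first exact: addsmxSl.
    exact: submx_trans q3p3 (submx_trans (addsmxSl p3 p4) (addsmxSr _ _)).
  exact: submx_trans q4p4 (submx_trans (addsmxSr p3 p4) (addsmxSr _ _)).
have rBm : (1 <= \rank (B :&: (p3 + p4)))%N.
  have h1 : (B + (p3 + p4) <= q1 + (p3 + p4))%MS by rewrite addsmx_sub Bm addsmxSr.
  have := mxrankS h1; have [h2 _] := mxrank_adds_leqif q1 (p3 + p4)%MS.
  have := rank_leq_row q1; have := mxrank_sum_cap B (p3 + p4)%MS; rewrite rB rm; nl.
have nAm : ~~ (A <= p3 + p4)%MS.
  apply/negP => Am.
  have mA : (p3 + p4 <= A)%MS by apply: supr Am _; rewrite rA rm.
  have : (B :&: (p3 + p4) <= B :&: A)%MS by apply: capmxS.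
  move/mxrankS; rewrite [(B :&: A)%MS]capmxC AB0; nl.
have rAm : (\rank (A :&: (p3 + p4)) <= 1)%N.
  rewrite leqNgt; apply/negP => h; move/negP: nAm; apply.
  apply: submx_trans (capmxSr A _); apply: supr (capmxSl _ _) _.
  have := mxrankS (capmxSl A (p3 + p4)%MS); rewrite rA; nl.
have AmP : (A + (p3 + p4) <= p2 + p3 + p4)%MS by rewrite addsmx_sub hA mP.
have rX : \rank (A + (p3 + p4))%MS = 3%N.
  have := mxrankS AmP; have := mxrank_sum_cap A (p3 + p4)%MS; rewrite rA rm; nl.
have PX : (p2 + p3 + p4 <= A + (p3 + p4))%MS by apply: supr AmP _; rewrite rX.
have rBX : (\rank (B :&: (A + (p3 + p4))) <= 1)%N.
  have h1 : (A + B <= B + (A + (p3 + p4)))%MS.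
    by rewrite addsmx_sub addsmxSl (submx_trans (addsmxSl A (p3 + p4)%MS) (addsmxSr B _)).
  have := mxrankS h1; have := mxrank_sum_cap B (A + (p3 + p4))%MS; rewrite rB rX rH; nl.
have h1 : (B :&: (p3 + p4) <= B :&: (A + (p3 + p4)))%MS by apply: capmxS => //; exact: addsmxSr.
have h2 : (B :&: (A + (p3 + p4)) <= B :&: (p3 + p4))%MS by apply: supr h1 _; nl.
have p2m : (p2 <= p3 + p4)%MS.
  apply: submx_trans (capmxSr B _); apply: submx_trans h2.
  by rewrite sub_capmx p2B (submx_trans p2P PX).
move/negP: nAm; apply; apply: submx_trans hA _; apply: sub3 => //.
  exact: addsmxSl.
exact: addsmxSr.
Qed.

Lemma subcolL m1 m2 (X : 'M[F]_(m1,5)) (Y : 'M[F]_(m2,5)) : (X <= col_mx X Y)%MS.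
Proof. by rewrite -addsmxE addsmxSl. Qed.
Lemma subcolR m1 m2 (X : 'M[F]_(m1,5)) (Y : 'M[F]_(m2,5)) : (Y <= col_mx X Y)%MS.
Proof. by rewrite -addsmxE addsmxSr. Qed.

Lemma col12 (x y z : 'rV[F]_5) : (col_mx (col_mx x y) z <= col_mx (col_mx y x) z)%MS.
Proof.
rewrite !col_mx_sub subcolR andbT.
by rewrite (submx_trans (subcolR y x) (subcolL _ z)) (submx_trans (subcolL y x) (subcolL _ z)).
Qed.
Lemma col23 (x y z : 'rV[F]_5) : (col_mx (col_mx x y) z <= col_mx (col_mx x z) y)%MS.
Proof.
rewrite !col_mx_sub subcolR.
by rewrite (submx_trans (subcolL x z) (subcolL _ y)) (submx_trans (subcolR x z) (subcolL _ y)).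
Qed.

Lemma swap12 (l a b c : 'M[F]_(2,5)) : repair31 l a b c -> repair31 l b a c.
Proof.
case=> pa [pb [pc [/and3P[? ? ?] /and3P[? ? ?] h]]].
exists pb, pa, pc; split; try by apply/and3P.
exact: submx_trans h (col12 _ _ _).
Qed.
Lemma swap23 (l a b c : 'M[F]_(2,5)) : repair31 l a b c -> repair31 l a c b.
Proof.
case=> pa [pb [pc [/and3P[? ? ?] /and3P[? ? ?] h]]].
exists pa, pc, pb; split; try by apply/and3P.
exact: submx_trans h (col23 _ _ _).
Qed.
End S.

Lemma uniq4 (i a b c : 'I_4) : uniq [:: i; a; b; c] ->
  [/\ i != a, i != b, i != c & [/\ a != b, a != c & b != c]].
Proof. by rewrite /= !inE !negb_or => /and4P[/and3P[-> -> ->] /andP[-> ->] -> _]. Qed.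

Lemma uniq4' (i a b c : 'I_4) : i != a -> i != b -> i != c -> a != b -> a != c -> b != c ->
  uniq [:: i; a; b; c].
Proof. by move=> ? ? ? ? ? ?; rewrite /= !inE !negb_or; apply/and4P; split=> //; [apply/and3P | apply/andP]. Qed.

Lemma cover (i a b c x : 'I_4) : uniq [:: i; a; b; c] -> x != i -> [\/ x = a, x = b | x = c].
Proof.
move=> u xi.
have : x \in [:: i; a; b; c].
  apply/negPn/negP => xn.
  have u' : uniq (x :: [:: i; a; b; c]) by rewrite cons_uniq xn u.
  have := max_card (mem (x :: [:: i; a; b; c])).
  by rewrite card_ord (card_uniqP u').
rewrite !inE (negbTE xi) /= => /or3P[] /eqP ->; by [apply: Or31 | apply: Or32 | apply: Or33].
Qed.

Lemma uniq3 (i a b : 'I_4) : i != a -> i != b -> a != b -> uniq [:: i; a; b].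
Proof. by move=> ? ? ?; rewrite /= !inE !negb_or; apply/and3P; split=> //; apply/andP. Qed.

Lemma perm_rep (F : finFieldType) (ls : 'I_4 -> 'M[F]_(2,5)) (i a b c x y z : 'I_4) :
  uniq [:: i; a; b; c] -> uniq [:: i; x; y; z] ->
  repair31 (ls i) (ls a) (ls b) (ls c) -> repair31 (ls i) (ls x) (ls y) (ls z).
Proof.
move=> u1 u2 r.
have [ix iy iz [xy xz yz]] := uniq4 u2.
rewrite eq_sym in ix; rewrite eq_sym in iy; rewrite eq_sym in iz.
case: (cover u1 ix) => ?; subst x; case: (cover u1 iy) => ?; subst y;
  case: (cover u1 iz) => ?; subst z; rewrite ?eqxx // in xy xz yz *;
  first [exact r | exact: swap12 r | exact: swap23 r | exact: swap12 (swap23 r)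
        | exact: swap23 (swap12 r) | exact: swap12 (swap23 (swap12 r))].
Qed.

Lemma pick (F : finFieldType) (ls : 'I_4 -> 'M[F]_(2,5)) (i j a b c : 'I_4) :
  uniq [:: i; a; b; c] -> repair31 (ls i) (ls a) (ls b) (ls c) -> j != i ->
  exists k m, uniq [:: i; j; k; m] /\ repair31 (ls i) (ls j) (ls k) (ls m).
Proof.
move=> u1 r1 ji.
have [ia ib ic [ab ac bc]] := uniq4 u1.
case: (cover u1 ji) => ?; subst j.
- by exists b, c.
- have u : uniq [:: i; b; a; c] by apply: uniq4' => //; rewrite eq_sym.
  by exists a, c; split=> //; apply: perm_rep u1 u r1.
- have u : uniq [:: i; c; a; b] by apply: uniq4' => //; rewrite eq_sym.
  by exists a, b; split=> //; apply: perm_rep u1 u r1.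
Qed.

Unset Implicit Arguments.
Theorem mainTheorem5 (F : finFieldType) (ls : 'I_4 -> 'M[F]_(2,5)) :
  (forall i, is_line (ls i)) ->
  any_three_span ls ->
  pairwise_skew ls ->
  forall i j : 'I_4, repaired_from_rest ls i -> repaired_from_rest ls j -> i = j.
Proof.
move=> hl h3 h2 i j [j1 [k1 [m1 [u1 r1]]]] [j2 [k2 [m2 [u2 r2]]]].
case: (eqVneq i j) => // ij; exfalso.
have ji : j != i by rewrite eq_sym.
have [k [m [u r]]] := pick u1 r1 ji.
have [k' [m' [u' r']]] := pick u2 r2 ij.
have [_ ik im [jk jm km]] := uniq4 u.
have u'' : uniq [:: j; i; k; m] by apply: uniq4' => //; rewrite eq_sym.
have r'' := perm_rep u' u'' r'.
case: r => p2 [p3 [p4 [/and3P[p20 p30 p40] /and3P[p2B p3C p4D] hA]]].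
case: r'' => q1 [q3 [q4 [/and3P[q10 q30 q40] /and3P[q1A q3C q4D] hB]]].
apply: (core (A := ls i) (B := ls j) (C := ls k) (D := ls m)) p20 p30 p40 q10 q30 q40 p2B p3C p4D q1A q3C q4D hA hB.
- exact/eqP/hl.
- exact/eqP/hl.
- exact: h2.
- exact: h2.
- by apply: h3; apply: uniq3.
- by apply: h3; apply: uniq3.
Qed.
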